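(* Let $\mapsto_S$ be the indexed small-step head-reduction relation on legal top-level terms and $\mapsto_T$ the named small-step head-reduction relation on pure $\lambda$-terms, with reflexive–transitive closures $\mapsto_S^*$, $\mapsto_T^*$. Then: (1) for legal top-level terms $t, t'$, $t \mapsto_S^* t'$ implies $t^* \mapsto_T^* t'^*$; (2) for pure $\lambda$-terms $v, v'$, $v \mapsto_T^* v'$ implies $v^\# \mapsto_S^* v'^\#$; (3) for every legal top-level term $t$, $t \mapsto_S^* t^{*\#}$, and for every pure $\lambda$-term $v$, $v^{\#*} = v$.
   Context: Pure $\lambda$-terms: $v ::= x \mid v\,v \mid \lambda x.v$, with capture-avoiding substitution $v[v'/x]$. Indexed semantics $\mapsto_S$. Indices $i ::= \mathrm{zero} \mid \mathrm{succ}(i)$. Terms $v ::= x \mid v\,v \mid \lambda x.v \mid i$. Top-level terms $t ::= v \mid \lambda.t$. Evaluation contexts $E ::= \Box \mid E\,v$. Top-level contexts $S ::= \Box \mid \lambda.S$. $\mathrm{Count}(\Box)=\mathrm{zero}$, $\mathrm{Count}(\lambda.S)=\mathrm{succ}(\mathrm{Count}(S))$. Rules: ($\beta$) $S[E[(\lambda x.v)\,v']] \mapsto_S S[E[v[v'/x]]]$; (non-$\beta$) $S[\lambda x.v] \mapsto_S S[\lambda.v[\mathrm{Count}(S)/x]]$. Readback rule: $S[\lambda.v] \hookrightarrow S[\lambda x.v[x/\mathrm{Count}(S)]]$ with $x$ fresh, where $v[x/i]$ replaces every occurrence of index $i$ in $v$ by $x$. A top-level term $S[v]$ is legal iff every index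 $i$ occurring in $v$ satisfies $i<\mathrm{Count}(S)$. Named semantics $\mapsto_T$. Evaluation contexts $E ::= \Box \mid E\,v$; top-level contexts $S ::= E \mid \lambda x.S$; rule $S[(\lambda x.v)\,v'] \mapsto_T S[v[v'/x]]$. Translations: for a legal top-level term $t$, $t^*$ is the (pure $\lambda$-term) normal form of $t$ with respect to the readback rule $\hookrightarrow$; for a pure $\lambda$-term $v$, $v^\#$ is the normal form of $v$ with respect to the non-$\beta$ rule of $\mapsto_S$. *)

(* Defs.v *)
(* Lambda-terms are represented with de Bruijn indices for
   variables (so alpha-equivalent terms are syntactically equal, and
   capture-avoiding substitution is the usual de Bruijn substitution).
   Free variables of open terms are "dangling" de Bruijn indices.
   The "indices" i ::= zero | succ(i) of the indexed semantics are nats. *)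
From Stdlib Require Import Arith Relations.

(* Terms v ::= x | v v | \x.v | i   (pure terms are those without indices) *)
Inductive tm : Type :=
| var (n : nat)
| app (a b : tm)
| lam (b : tm)           (* \x.v  (named lambda) *)
| ind (i : nat).

(* Top-level terms  t ::= v | \.t *)
Inductive top : Type :=
| Tv (v : tm)
| Tlam (t : top).

Fixpoint lift (k : nat) (t : tm) : tm :=
  match t with
  | var n => if k <=? n then var (S n) else var n
  | app a b => app (lift k a) (lift k b)
  | lam b => lam (lift (S k) b)
  | ind i => ind i
  end.

Fixpoint subst (k : nat) (u : tm) (t : tm) : tm :=
  match t with
  | var n => if n =? k then u else if k <? n then var (pred n) else var n
  | app a b => app (subst k u a) (subst k u b)
  | lam b => lam (subst (S k) (lift 0 u) b)
  | ind i => ind i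
  end.

(* v[v'/x] where \x.v = lam b *)
Definition inst (b u : tm) : tm := subst 0 u b.

(* v[x/i] followed by binding x at depth k: replaces index i by the
   variable bound at depth k (other free variables are shifted) *)
Fixpoint close (k i : nat) (t : tm) : tm :=
  match t with
  | var n => if k <=? n then var (S n) else var n
  | app a b => app (close k i a) (close k i b)
  | lam b => lam (close (S k) i b)
  | ind j => if j =? i then var k else ind j
  end.

Fixpoint occurs (i : nat) (t : tm) : Prop :=
  match t with
  | var _ => False
  | app a b => occurs i a \/ occurs i b
  | lam b => occurs i b
  | ind j => j = i
  end.

Definition pure (v : tm) : Prop := forall i, ~ occurs i v.

Inductive ectx : Type :=
| EHole
| EApp (E : ectx) (v : tm).

Fixpoint plugE (E : ectx) (t : tm) : tm :=
  match E with
  | EHole => t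
  | EApp E v => app (plugE E t) v
  end.

Inductive sctx : Type :=
| SHole
| SLam (Sc : sctx).

Fixpoint plugS (Sc : sctx) (t : top) : top :=
  match Sc with
  | SHole => t
  | SLam Sc' => Tlam (plugS Sc' t)
  end.

Fixpoint Count (Sc : sctx) : nat :=
  match Sc with
  | SHole => 0
  | SLam S' => Datatypes.S (Count S')
  end.

Definition legal (t : top) : Prop :=
  forall Sc v, t = plugS Sc (Tv v) -> forall i, occurs i v -> i < Count Sc.

(* the non-beta rule  S[\x.v] |->_S S[\.v[Count(S)/x]] *)
Inductive nonbeta : top -> top -> Prop :=
| nonbeta_step Sc b :
    nonbeta (plugS Sc (Tv (lam b)))
            (plugS Sc (Tlam (Tv (inst b (ind (Count Sc)))))).

Inductive stepS : top -> top -> Prop :=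
| stepS_beta Sc E b u :
    stepS (plugS Sc (Tv (plugE E (app (lam b) u))))
          (plugS Sc (Tv (plugE E (inst b u))))
| stepS_nonbeta t t' : nonbeta t t' -> stepS t t'.

(* the readback rule  S[\.v] ~> S[\x.v[x/Count(S)]] *)
Inductive readback : top -> top -> Prop :=
| readback_step Sc v :
    readback (plugS Sc (Tlam (Tv v)))
             (plugS Sc (Tv (lam (close 0 (Count Sc) v)))).

Inductive tctx : Type :=
| TE (E : ectx)
| TLam (Sc : tctx).

Fixpoint plugT (Sc : tctx) (t : tm) : tm :=
  match Sc with
  | TE E => plugE E t
  | TLam Sc' => lam (plugT Sc' t)
  end.

Inductive stepT : tm -> tm -> Prop :=
| stepT_beta Sc b u : stepT (plugT Sc (app (lam b) u)) (plugT Sc (inst b u)).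

Definition star {A : Type} (R : A -> A -> Prop) : A -> A -> Prop :=
  clos_refl_trans A R.

Definition normal_form {A : Type} (R : A -> A -> Prop) (a b : A) : Prop :=
  star R a b /\ forall c, ~ R b c.

(* t^* = u  and  v^# = t *)
Definition star_tr (t : top) (u : tm) : Prop := normal_form readback t (Tv u).
Definition sharp_tr (v : tm) (t : top) : Prop := normal_form nonbeta (Tv v) t.

(* Main.v *)
Require Import Defs.
From Stdlib Require Import Arith Relations Lia.

Ltac crush := repeat (simpl in *; match goal with
 | |- context [?a <=? ?b] => destruct (Nat.leb_spec a b)
 | |- context [?a =? ?b] => destruct (Nat.eqb_spec a b)
 | |- context [?a <? ?b] => destruct (Nat.ltb_spec a b)
 | |- context [match ?n with 0 => _ | S _ => _ end] => destruct n
 end); try reflexivity; try lia; try (f_equal; lia).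

Lemma subst_ind_lift : forall u i c j, c <= j ->
  subst (S j) (ind i) (lift c u) = lift c (subst j (ind i) u).
Proof. induction u; intros ii c j Hc; simpl.
 - crush.
 - rewrite IHu1, IHu2 by lia; reflexivity.
 - rewrite IHu by lia; reflexivity.
 - reflexivity. Qed.

Lemma subst_ind_subst : forall b u n j i, n <= j ->
  subst j (ind i) (subst n u b) = subst n (subst j (ind i) u) (subst (S j) (ind i) b).
Proof. induction b; intros u n0 j ii Hn; simpl.
 - crush.
 - rewrite IHb1, IHb2 by lia; reflexivity.
 - rewrite IHb by lia. rewrite subst_ind_lift by lia. reflexivity.
 - reflexivity. Qed.

Lemma close_lift : forall u i c j, c <= j ->
  close (S j) i (lift c u) = lift c (close j i u).
Proof. induction u; intros ii c j Hc; simpl.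
 - crush.
 - rewrite IHu1, IHu2 by lia; reflexivity.
 - rewrite IHu by lia; reflexivity.
 - crush. Qed.

Lemma close_subst : forall b u n j i, n <= j ->
  close j i (subst n u b) = subst n (close j i u) (close (S j) i b).
Proof. induction b; intros u n0 j ii Hn; simpl.
 - crush.
 - rewrite IHb1, IHb2 by lia; reflexivity.
 - rewrite IHb by lia. rewrite close_lift by lia. reflexivity.
 - crush. Qed.

Lemma subst_close : forall v k i, subst k (ind i) (close k i v) = v.
Proof. induction v; intros k ii; simpl.
 - crush.
 - rewrite IHv1, IHv2; reflexivity.
 - rewrite IHv; reflexivity.
 - crush. Qed.

Lemma close_subst_ind : forall b k i, ~ occurs i b -> close k i (subst k (ind i) b) = b.
Proof. induction b; intros k ii Hn; simpl in *.
 - crush.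
 - rewrite IHb1, IHb2 by tauto; reflexivity.
 - rewrite IHb by tauto; reflexivity.
 - crush. Qed.

Lemma occurs_lift : forall u i c, occurs i (lift c u) -> occurs i u.
Proof. induction u; intros ii c H; simpl in *.
 - destruct (c <=? n); simpl in H; contradiction.
 - destruct H; [left|right]; eauto.
 - eauto.
 - auto. Qed.

Lemma occurs_subst : forall b u k i, occurs i (subst k u b) -> occurs i b \/ occurs i u.
Proof. induction b; intros u k ii H; simpl in *.
 - destruct (n =? k); auto. destruct (k <? n); simpl in H; contradiction.
 - destruct H as [H|H]; [apply IHb1 in H|apply IHb2 in H]; tauto.
 - apply IHb in H as [H|H]; auto. right; eapply occurs_lift; eauto.
 - auto. Qed.
Fixpoint Tlams (n : nat) (t : top) : top :=
  match n with 0 => t | S n' => Tlam (Tlams n' t) end.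
Fixpoint mkS (n:nat) : sctx := match n with 0 => SHole | S n' => SLam (mkS n') end.

Lemma plugS_Tlams Sc t : plugS Sc t = Tlams (Count Sc) t.
Proof. induction Sc; simpl; congruence. Qed.
Lemma Count_mkS n : Count (mkS n) = n.
Proof. induction n; simpl; congruence. Qed.
Lemma Tlams_S n t : Tlams n (Tlam t) = Tlams (S n) t.
Proof. induction n; simpl in *; congruence. Qed.
Lemma Tlams_inj : forall n m x y, Tlams n (Tv x) = Tlams m (Tv y) -> n = m /\ x = y.
Proof. induction n; destruct m; simpl; intros x y H; try discriminate.
 - inversion H; auto.
 - inversion H. destruct (IHn m x y H1). auto. Qed.
Lemma top_form t : exists n v, t = Tlams n (Tv v).
Proof. induction t. exists 0, v; reflexivity. destruct IHt as [n [v ->]]. exists (S n), v. reflexivity. Qed.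

Lemma nonbeta_inv t t' : nonbeta t t' -> exists n b, t = Tlams n (Tv (lam b)) /\ t' = Tlams (S n) (Tv (inst b (ind n))).
Proof. intros []. exists (Count Sc), b. rewrite !plugS_Tlams, Tlams_S. split; reflexivity. Qed.
Lemma nonbeta_intro n b : nonbeta (Tlams n (Tv (lam b))) (Tlams (S n) (Tv (inst b (ind n)))).
Proof. pose proof (nonbeta_step (mkS n) b) as H. rewrite !plugS_Tlams, Count_mkS, Tlams_S in H. exact H. Qed.
Lemma readback_inv t t' : readback t t' -> exists n v, t = Tlams (S n) (Tv v) /\ t' = Tlams n (Tv (lam (close 0 n v))).
Proof. intros []. exists (Count Sc), v. rewrite !plugS_Tlams, Tlams_S. split; reflexivity. Qed.
Lemma readback_intro n v : readback (Tlams (S n) (Tv v)) (Tlams n (Tv (lam (close 0 n v)))).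
Proof. pose proof (readback_step (mkS n) v) as H. rewrite !plugS_Tlams, Count_mkS, Tlams_S in H. exact H. Qed.
Lemma beta_intro n E b u : stepS (Tlams n (Tv (plugE E (app (lam b) u)))) (Tlams n (Tv (plugE E (inst b u)))).
Proof. pose proof (stepS_beta (mkS n) E b u) as H. rewrite !plugS_Tlams, Count_mkS in H. exact H. Qed.
Lemma stepS_inv t t': stepS t t' -> (exists n E b u, t = Tlams n (Tv (plugE E (app (lam b) u))) /\ t' = Tlams n (Tv (plugE E (inst b u)))) \/ nonbeta t t'.
Proof. intros [Sc E b u|]; [left|right; auto]. exists (Count Sc), E, b, u. rewrite !plugS_Tlams. split; reflexivity. Qed.

Definition det {A} (R : A -> A -> Prop) := forall a b c, R a b -> R a c -> b = c.
Lemma nonbeta_det : det nonbeta.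
Proof. intros a b c H1 H2. apply nonbeta_inv in H1 as (n&b1&->&->). apply nonbeta_inv in H2 as (m&b2&E&->).
  apply Tlams_inj in E as [-> E]. inversion E; subst. reflexivity. Qed.
Lemma readback_det : det readback.
Proof. intros a b c H1 H2. apply readback_inv in H1 as (n&b1&->&->). apply readback_inv in H2 as (m&b2&E&->).
  apply Tlams_inj in E as [E E']. inversion E; inversion E'; subst. reflexivity. Qed.

Lemma star_1n {A} (R : A -> A -> Prop) a b : star R a b -> clos_refl_trans_1n A R a b.
Proof. apply clos_rt_rt1n. Qed.
Lemma nf_conf {A} (R: A->A->Prop) : det R -> forall a b c, star R a b -> (forall d, ~ R b d) -> star R a c -> star R c b.
Proof.
 intros D a b c Hab Nb Hac. apply star_1n in Hab. apply star_1n in Hac. revert c Hac.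
 induction Hab as [x|x y z H Hab IHHab]; intros c Hac.
 - inversion Hac; subst. apply rt_refl. exfalso; eapply Nb; eauto.
 - inversion Hac; subst.
   + apply rt_trans with y. apply rt_step; auto. apply clos_rt1n_rt; auto.
   + match goal with H1 : R x ?w, H2 : clos_refl_trans_1n A R ?w c |- _ =>
       pose proof (D _ _ _ H H1); subst; apply IHHab; auto end.
Qed.
Lemma nf_unique {A} (R:A->A->Prop) a b c : det R -> normal_form R a b -> normal_form R a c -> b = c.
Proof. intros D [H1 N1] [H2 N2]. pose proof (nf_conf R D a b c H1 N1 H2) as H. apply star_1n in H.
  inversion H; subst; [reflexivity| exfalso; eapply N2; eauto]. Qed.
Lemma star_mono {A} (R R' : A -> A -> Prop) : (forall x y, R x y -> R' x y) -> forall a b, star R a b -> star R' a b.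
Proof. intros H a b S. induction S; [apply rt_step; auto|apply rt_refl|eapply rt_trans; eauto]. Qed.
Lemma star_rev {A} (R R' : A -> A -> Prop) : (forall x y, R x y -> R' y x) -> forall a b, star R a b -> star R' b a.
Proof. intros H a b S. induction S; [apply rt_step; auto|apply rt_refl|eapply rt_trans; eauto]. Qed.

Lemma legal_iff n v : legal (Tlams n (Tv v)) <-> (forall i, occurs i v -> i < n).
Proof. split.
 - intros H i Hi. pose proof (H (mkS n) v). rewrite plugS_Tlams, Count_mkS in H0. auto.
 - intros H Sc v' E i Hi. rewrite plugS_Tlams in E. apply Tlams_inj in E as [-> ->]. auto. Qed.
Fixpoint closeE (k i : nat) (E : ectx) : ectx :=
  match E with EHole => EHole | EApp E v => EApp (closeE k i E) (close k i v) end.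
Fixpoint substE (k : nat) (u : tm) (E : ectx) : ectx :=
  match E with EHole => EHole | EApp E v => EApp (substE k u E) (subst k u v) end.
Lemma close_plugE k i E x : close k i (plugE E x) = plugE (closeE k i E) (close k i x).
Proof. induction E; simpl; congruence. Qed.
Lemma subst_plugE k u E x : subst k u (plugE E x) = plugE (substE k u E) (subst k u x).
Proof. induction E; simpl; congruence. Qed.

Lemma stepT_lam x y : stepT x y -> stepT (lam x) (lam y).
Proof. intros []. exact (stepT_beta (TLam Sc) b u). Qed.
Lemma stepT_close x y k i : stepT x y -> stepT (close k i x) (close k i y).
Proof. intros []. revert k. induction Sc; intros k; simpl.
 - rewrite !close_plugE. simpl. unfold inst. rewrite close_subst by lia.
   exact (stepT_beta (TE (closeE k i E)) _ _).
 - apply stepT_lam, IHSc. Qed.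

Fixpoint F (n : nat) (v : tm) : tm := match n with 0 => v | S n' => F n' (lam (close 0 n' v)) end.
Lemma F_step : forall n x y, stepT x y -> stepT (F n x) (F n y).
Proof. induction n; intros x y H; simpl; auto. apply IHn, stepT_lam, stepT_close, H. Qed.
Lemma readback_F : forall n v, star readback (Tlams n (Tv v)) (Tv (F n v)).
Proof. induction n; intros v; simpl. apply rt_refl.
  eapply rt_trans; [apply rt_step; apply readback_intro|]. apply IHn. Qed.
Lemma readback_Tv v d : ~ readback (Tv v) d.
Proof. intros H. apply readback_inv in H as (n&w&E&_). discriminate. Qed.
Lemma star_tr_F n v : star_tr (Tlams n (Tv v)) (F n v).
Proof. split. apply readback_F. apply readback_Tv. Qed.
Lemma star_tr_eq n v u : star_tr (Tlams n (Tv v)) u -> u = F n v.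
Proof. intros H. pose proof (nf_unique _ _ _ _ readback_det H (star_tr_F n v)). congruence. Qed.

Lemma rb_nb x y : readback x y -> nonbeta y x.
Proof. intros H. apply readback_inv in H as (n&v&->&->).
  pose proof (nonbeta_intro n (close 0 n v)) as H. unfold inst in H. rewrite subst_close in H. exact H. Qed.
Lemma nb_rb x y : legal x -> nonbeta x y -> readback y x.
Proof. intros L H. apply nonbeta_inv in H as (n&b&->&->). rewrite legal_iff in L.
  pose proof (readback_intro n (inst b (ind n))) as H. unfold inst in H.
  rewrite close_subst_ind in H. exact H. intros Hn. specialize (L n Hn). lia. Qed.

Lemma occurs_plugE i E x y : (occurs i x -> occurs i y) -> occurs i (plugE E x) -> occurs i (plugE E y).
Proof. intros H. induction E; simpl; tauto. Qed.
Lemma legal_step t t' : legal t -> stepS t t' -> legal t'.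
Proof. intros L H. apply stepS_inv in H as [(n&E&b&u&->&->)|H].
 - rewrite legal_iff in *. intros i Hi. apply L. revert Hi. apply occurs_plugE.
   intros Hi. apply occurs_subst in Hi. simpl. tauto.
 - apply nonbeta_inv in H as (n&b&->&->). rewrite legal_iff in *. intros i Hi.
   apply occurs_subst in Hi as [Hi|Hi]. specialize (L i Hi). lia. simpl in Hi. lia. Qed.
Lemma legal_nb t t' : legal t -> nonbeta t t' -> legal t'.
Proof. intros; eapply legal_step; eauto. apply stepS_nonbeta; auto. Qed.

Lemma part1_step t t1 u u1 : legal t -> stepS t t1 -> star_tr t u -> star_tr t1 u1 -> star stepT u u1.
Proof. intros L H Hu Hu1. apply stepS_inv in H as [(n&E&b&w&->&->)|H].
 - apply star_tr_eq in Hu; apply star_tr_eq in Hu1; subst. apply rt_step, F_step.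
   exact (stepT_beta (TE E) b w).
 - pose proof (nb_rb _ _ L H) as R.
   assert (star_tr t1 u) by (destruct Hu; split; auto; eapply rt_trans; [apply rt_step; eauto|auto]).
   pose proof (nf_unique _ _ _ _ readback_det H0 Hu1). inversion H1; subst. apply rt_refl. Qed.

Lemma part1 t t' u u' : legal t -> star stepS t t' -> star_tr t u -> star_tr t' u' -> star stepT u u'.
Proof. intros L H. apply star_1n in H. revert u u' L. induction H as [x|x y z Hxy Hyz IH]; intros u u' L Hu Hu'.
 - pose proof (nf_unique _ _ _ _ readback_det Hu Hu'). inversion H; subst. apply rt_refl.
 - destruct (top_form y) as (n&v&Ey). pose proof (star_tr_F n v) as Hy. rewrite <- Ey in Hy.
   eapply rt_trans. eapply part1_step; eauto. apply IH; eauto. eapply legal_step; eauto. Qed.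

Lemma star_tr_ex t : exists u, star_tr t u.
Proof. destruct (top_form t) as (n&v&->). eexists; apply star_tr_F. Qed.
Fixpoint Op (k m : nat) (x : tm) : tm :=
  match m with 0 => x | S m' => Op (S k) m' (subst m' (ind k) x) end.
Fixpoint L (m:nat) (x:tm) : tm := match m with 0 => x | S m' => lam (L m' x) end.
Definition notlam x := forall b, x <> lam b.

Lemma subst_L : forall m j k x, subst j (ind k) (L m x) = L m (subst (m + j) (ind k) x).
Proof. induction m; intros j k x; simpl. reflexivity. rewrite IHm, Nat.add_succ_r. reflexivity. Qed.

Lemma nonbeta_L : forall m k x, star nonbeta (Tlams k (Tv (L m x))) (Tlams (k + m) (Tv (Op k m x))).
Proof. induction m; intros k x.
 - rewrite Nat.add_0_r. apply rt_refl.
 - eapply rt_trans; [apply rt_step; apply nonbeta_intro|]. unfold inst. rewrite subst_L, Nat.add_0_r.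
   replace (k + S m) with (S k + m) by lia. apply IHm. Qed.

Lemma notlam_subst x j k : notlam x -> notlam (subst j (ind k) x).
Proof. intros H b E. destruct x; simpl in E; try discriminate.
 - destruct (n =? j); try discriminate. destruct (j <? n); discriminate.
 - eapply H; eauto. Qed.
Lemma notlam_Op : forall m k x, notlam x -> notlam (Op k m x).
Proof. induction m; intros k x H; simpl; auto. apply IHm, notlam_subst, H. Qed.
Lemma L_form v : exists m y, v = L m y /\ notlam y.
Proof. induction v.
 - exists 0, (var n); split; auto. intros b E; discriminate.
 - exists 0, (app v1 v2); split; auto. intros b E; discriminate.
 - destruct IHv as (m&y&->&H). exists (S m), y; auto.
 - exists 0, (ind i); split; auto. intros b E; discriminate. Qed.

Lemma nonbeta_nf n y d : notlam y -> ~ nonbeta (Tlams n (Tv y)) d.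
Proof. intros N H. apply nonbeta_inv in H as (m&b&E&_). apply Tlams_inj in E as [_ E]. eapply N; eauto. Qed.

Lemma sharp_L m y : notlam y -> sharp_tr (L m y) (Tlams m (Tv (Op 0 m y))).
Proof. intros N. split. apply (nonbeta_L m 0 y). intros d; apply nonbeta_nf, notlam_Op, N. Qed.
Lemma sharp_ex v : exists t, sharp_tr v t.
Proof. destruct (L_form v) as (m&y&->&N). eexists; apply sharp_L, N. Qed.

Lemma Op_beta : forall m k E b u, exists E' b' u',
  Op k m (plugE E (app (lam b) u)) = plugE E' (app (lam b') u') /\
  Op k m (plugE E (inst b u)) = plugE E' (inst b' u').
Proof. induction m; intros k E b u; simpl.
 - exists E, b, u; auto.
 - rewrite !subst_plugE. simpl. unfold inst. rewrite subst_ind_subst by lia. apply IHm. Qed.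

Lemma plugT_form Sc : exists m E, forall x, plugT Sc x = L m (plugE E x).
Proof. induction Sc. exists 0, E; auto. destruct IHSc as (m&E&H). exists (S m), E. intros; simpl; rewrite H; auto. Qed.

Lemma plugE_notlam E a c : notlam (plugE E (app a c)).
Proof. intros b. destruct E; simpl; discriminate. Qed.

Lemma part2_step v v' w w' : stepT v v' -> sharp_tr v w -> sharp_tr v' w' -> star stepS w w'.
Proof. intros H Hw Hw'. destruct H as [Sc b u]. destruct (plugT_form Sc) as (m&E&HS). rewrite !HS in *.
  destruct (Op_beta m 0 E b u) as (E'&b'&u'&H1&H2).
  pose proof (nonbeta_L m 0 (plugE E (app (lam b) u))) as A. rewrite H1 in A. simpl in A.
  assert (w = Tlams m (Tv (plugE E' (app (lam b') u')))) as ->.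
  { eapply nf_unique. apply nonbeta_det. exact Hw. split. exact A. intros d; apply nonbeta_nf, plugE_notlam. }
  eapply rt_trans. apply rt_step, beta_intro.
  pose proof (nonbeta_L m 0 (plugE E (inst b u))) as B. rewrite H2 in B. simpl in B.
  destruct Hw' as [C N]. apply (star_mono nonbeta). intros; apply stepS_nonbeta; auto.
  eapply nf_conf. apply nonbeta_det. exact C. exact N. exact B. Qed.

Lemma part2 v v' w w' : star stepT v v' -> sharp_tr v w -> sharp_tr v' w' -> star stepS w w'.
Proof. intros H. apply star_1n in H. revert w w'. induction H as [x|x y z Hxy Hyz IH]; intros w w' Hw Hw'.
 - pose proof (nf_unique _ _ _ _ nonbeta_det Hw Hw'). subst. apply rt_refl.
 - destruct (sharp_ex y) as (t&Ht). apply rt_trans with t. eapply part2_step; eauto. apply IH; auto. Qed.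

Lemma part3a t u w : star_tr t u -> sharp_tr u w -> star stepS t w.
Proof. intros [H1 _] [H2 N]. apply (star_mono nonbeta). intros; apply stepS_nonbeta; auto.
  eapply nf_conf. apply nonbeta_det. exact H2. exact N. apply (star_rev readback); auto. apply rb_nb. Qed.

Lemma nb_rb_star : forall a b, star nonbeta a b -> legal a -> star readback b a.
Proof. intros a b H. apply star_1n in H. induction H as [x|x y z Hxy Hyz IH]; intros Lx.
 - apply rt_refl.
 - eapply rt_trans. apply IH. eapply legal_nb; eauto. apply rt_step. apply nb_rb; auto. Qed.

Lemma part3b v w u : pure v -> sharp_tr v w -> star_tr w u -> u = v.
Proof. intros P [H N] Hu. assert (legal (Tv v)) as Lv.
  { change (Tv v) with (Tlams 0 (Tv v)). apply legal_iff. intros i Hi. exfalso; eapply P; eauto. }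
  pose proof (nb_rb_star _ _ H Lv).
  assert (star_tr w v) by (split; auto; apply readback_Tv).
  pose proof (nf_unique _ _ _ _ readback_det Hu H1). congruence. Qed.

Theorem theorem4 :
  (forall t, legal t -> exists u, star_tr t u) /\
  (forall v, pure v -> exists t, sharp_tr v t) /\
  (forall t t' u u', legal t -> legal t' ->
     star stepS t t' -> star_tr t u -> star_tr t' u' -> star stepT u u') /\
  (forall v v' w w', pure v -> pure v' ->
     star stepT v v' -> sharp_tr v w -> sharp_tr v' w' -> star stepS w w') /\
  (forall t u w, legal t -> star_tr t u -> sharp_tr u w -> star stepS t w) /\
  (forall v w u, pure v -> sharp_tr v w -> star_tr w u -> u = v).
Proof.
  split. intros; apply star_tr_ex.
  split. intros; apply sharp_ex.
  split. intros t t' u u' L _ H Hu Hu'. exact (part1 t t' u u' L H Hu Hu').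
  split. intros v v' w w' _ _ H Hw Hw'. exact (part2 v v' w w' H Hw Hw').
  split. intros t u w _ Hu Hw. exact (part3a t u w Hu Hw).
  intros v w u P Hw Hu. exact (part3b v w u P Hw Hu).
Qed.
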